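(* Let $p$ be a prime, $m$ a positive integer, $e\geq2$, and $b\ge2$ an integer. Let $1\leq i\leq p^{e-1}$ be such that $i+b\leq p^e$ and $i\leq b$. Then $d_b(\mathcal{C}_i)=i+b$.
   Context: For $0\le i\le p^e$, $\mathcal{C}_i$ denotes the cyclic code $\langle (x-1)^i\rangle\subseteq \mathbb{F}_{p^m}[x]/\langle x^{p^e}-1\rangle$, with polynomials identified with their coefficient vectors in $\mathbb{F}_{p^m}^{p^e}$. For $c\in\mathbb{F}_{p^m}^{n}$, $\pi_b(c)$ is the list of the $n$ cyclically consecutive $b$-tuples $(c_j,\dots,c_{j+b-1})$ (indices mod $n$), $d_b(c,c')=d_H(\pi_b(c),\pi_b(c'))$, and $d_b(\mathcal{C})$ is the minimum of $d_b(c,c')$ over distinct $c,c'\in\mathcal{C}$. *)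

(* Defs.v *)
From HB Require Import structures.
From mathcomp Require Import all_boot all_order all_algebra all_field.
Set Implicit Arguments. Unset Strict Implicit. Unset Printing Implicit Defensive.
Import GRing.Theory.
Local Open Scope ring_scope.

Definition word (F : finFieldType) (n : nat) := {ffun 'I_n -> F}.

Definition word_poly (F : finFieldType) (n : nat) (c : word F n) : {poly F} :=
  \sum_(j < n) c j *: 'X^j.

(* c belongs to the cyclic code <(x-1)^i> in F[x]/<x^n - 1>:
   c is the (reduced) residue of some multiple of (x-1)^i modulo x^n - 1. *)
Definition in_cyc_code (F : finFieldType) (n i : nat) (c : word F n) : Prop :=
  exists g : {poly F}, word_poly c = (('X - 1) ^+ i * g) %% ('X^n - 1).

Definition symb (F : finFieldType) (n b : nat) (c : word F n) (j : 'I_n)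
  : {ffun 'I_b -> F} :=
  [ffun k : 'I_b => c (insubd j ((j + k) %% n)%N)].

Definition bdist (F : finFieldType) (n b : nat) (c c' : word F n) : nat :=
  #|[set j : 'I_n | symb b c j != symb b c' j]|.

Definition min_bdist (F : finFieldType) (n b : nat) (C : word F n -> Prop)
  (d : nat) : Prop :=
  (exists c c', [/\ C c, C c', c <> c' & bdist b c c' = d]) /\
  (forall c c', C c -> C c' -> c <> c' -> (d <= bdist b c c')%N).

(* Main.v *)
Require Import Defs.
From HB Require Import structures.
From mathcomp Require Import all_boot all_order all_algebra all_field.
From mathcomp Require Import zify.
Set Implicit Arguments. Unset Strict Implicit. Unset Printing Implicit Defensive.
Import GRing.Theory.
Local Open Scope ring_scope.

Lemma charX (F : finFieldType) p m e : prime p -> #|F| = (p ^ m)%N ->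
  ('X - 1 : {poly F}) ^+ (p ^ e) = 'X^(p ^ e) - 1.
Proof.
move=> pp cF.
have chF : p \in [pchar F] := card_finPcharP cF pp.
have chP : p \in [pchar {poly F}] by rewrite pchar_poly.
have hn : ([pchar {poly F}]).-nat (p ^ e)%N.
  rewrite (eq_pnat _ (pcharf_eq chP)) pnatX (pnat_id pp) //=.
by rewrite exprDn_pchar // exprNn_pchar // expr1n.
Qed.

Section Main.
Variable F : finFieldType.
Variable n' : nat.
Local Notation n := n'.+1.
Implicit Types u v w c : word F n.

Definition U u (x : nat) : F := u (inord (x %% n)).

Lemma UE u (x : 'I_n) : U u x = u x.
Proof. by rewrite /U modn_small // inord_val. Qed.

Lemma U_mod u x y : U u (x %% n + y) = U u (x + y).
Proof. by rewrite /U modnDml. Qed.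

Lemma U_n u x : U u (x + n) = U u x.
Proof. by rewrite /U modnDr. Qed.

Lemma symbE b u (j : 'I_n) (k : 'I_b) : symb b u j k = U u (j + k).
Proof.
rewrite /symb ffunE /U; congr (u _); apply: val_inj.
by rewrite /= inordK ?ltn_mod // insubdK // -topredE /= ltn_mod.
Qed.

Lemma symb_nz b u (j : 'I_n) k : (k < b)%N -> U u (j + k) != 0 -> symb b u j != 0.
Proof.
move=> kb nz; apply/eqP => H; move/eqP: nz; apply.
by rewrite -(symbE u j (Ordinal kb)) H ffunE.
Qed.

Lemma symb_z b u (j : 'I_n) k : (k < b)%N -> symb b u j = 0 -> U u (j + k) = 0.
Proof. by move=> kb H; rewrite -(symbE u j (Ordinal kb)) H ffunE. Qed.

Definition rotl u : word F n := [ffun k : 'I_n => U u (k + 1)].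

Lemma U_iter T u x : U (iter T rotl u) x = U u (x + T).
Proof.
elim: T x => [|T IH] x; first by rewrite addn0.
by rewrite iterS {1}/U ffunE inordK ?ltn_mod // U_mod IH -addnA add1n.
Qed.

Lemma wpE u : word_poly u = \poly_(j < n) U u j.
Proof. by rewrite poly_def; apply: eq_bigr => j _; rewrite UE. Qed.

Lemma coef_wp u k : (word_poly u)`_k = if (k < n)%N then U u k else 0.
Proof. by rewrite wpE coef_poly. Qed.

Lemma U_rotl u x : U (rotl u) x = U u (x + 1).
Proof. exact: (U_iter 1 u x). Qed.

Lemma rotl_poly u : 'X * word_poly (rotl u) = word_poly u + U u 0 *: ('X^n - 1).
Proof.
apply/polyP => k.
rewrite coefXM coefD coefZ coefB coefXn coef1 !coef_wp.
case: k => [|k] /=; first by rewrite mulrBr mulr0 mulr1 add0r subrr.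
rewrite U_rotl addn1.
case: (ltngtP k.+1 n) => H.
- by rewrite subr0 mulr0n mulr0 addr0.
- by rewrite subr0 mulr0n mulr0 addr0.
- rewrite subr0 mulr1 add0r.
  by rewrite H -(add0n n) U_n.
Qed.

Lemma rotl_dvd i u : ('X - 1 : {poly F}) ^+ i %| 'X^n - 1 ->
  ('X - 1) ^+ i %| word_poly u -> ('X - 1) ^+ i %| word_poly (rotl u).
Proof.
move=> hn hu.
have cop : coprimep (('X - 1 : {poly F}) ^+ i) 'X.
  apply: coprimep_expl.
  rewrite -[X in coprimep _ X]subr0 -polyC0.
  by rewrite coprimep_XsubC rootE !hornerE oppr_eq0 oner_eq0.
by rewrite -(Gauss_dvdpr _ cop) rotl_poly dvdp_add // -mul_polyC dvdp_mull.
Qed.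


Lemma iter_dvd T i u : ('X - 1 : {poly F}) ^+ i %| 'X^n - 1 ->
  ('X - 1) ^+ i %| word_poly u -> ('X - 1) ^+ i %| word_poly (iter T rotl u).
Proof.
move=> hn hu; elim: T => [|T IH] //=; exact: rotl_dvd.
Qed.

Definition nzs b u := [set j : 'I_n | symb b u j != 0].

Lemma card_nzs_iter T b u : #|nzs b (iter T rotl u)| = #|nzs b u|.
Proof.
pose h (j : 'I_n) : 'I_n := inord ((j + T) %% n).
have hE j : symb b (iter T rotl u) j = symb b u (h j).
  apply/ffunP => k; rewrite !symbE U_iter /h inordK ?ltn_mod // U_mod.
  by rewrite addnAC.
have -> : nzs b (iter T rotl u) = h @^-1: nzs b u.
  by apply/setP => j; rewrite !inE hE.
apply: card_preimset => j j' /(congr1 val); rewrite /= !inordK ?ltn_mod //.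
move/eqP; rewrite eqn_modDr !modn_small // => /eqP H; exact: val_inj.
Qed.

Lemma lower_v i b v : ('X - 1 : {poly F}) ^+ i %| word_poly v -> U v 0 != 0 ->
  (forall k, (n - b <= k < n)%N -> U v k = 0) -> (0 < b)%N -> (i <= b)%N ->
  (i + b <= n)%N -> (i + b <= #|nzs b v|)%N.
Proof.
move=> hdv hv0 hz b0 ib ibn.
have exP : exists d, (d < n)%N && (U v d != 0) by exists 0%N; rewrite hv0.
have ubP : forall d, (d < n)%N && (U v d != 0) -> (d <= n)%N.
  by move=> d /andP[/ltnW].
case: (ex_maxnP exP ubP) => d /andP[dn vd] dmax.
have dnb : (d < n - b)%N.
  rewrite ltnNge; apply/negP => H; move/eqP: vd; apply; apply: hz; lia.
have id : (i <= d)%N.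
  have wp0 : word_poly v != 0.
    by apply/eqP => H; move: (coef_wp v 0); rewrite H coef0 /= => H0; move: hv0; rewrite -H0 eqxx.
  have := dvdp_leq wp0 hdv.
  rewrite -polyC1 size_exp_XsubC => H.
  have : (size (word_poly v) <= d.+1)%N.
    apply/leq_sizeP => j hj; rewrite coef_wp; case: ifP => // jn.
    apply/eqP; apply: contraT => hj0.
    have := dmax j; rewrite jn hj0 => /(_ isT); lia.
  by move=> H2; rewrite -ltnS (leq_trans H H2).
pose gv (k : nat) := if k == 0%N then 0%N else if (k < b)%N then (n - k)%N else (d - (k - b))%N.
have gvn (k : 'I_(i + b)) : (gv k < n)%N.
  rewrite /gv; case: eqP => [_|k0] //.
  case: ifP => _; have := ltn_ord k; lia.
pose g (k : 'I_(i + b)) : 'I_n := inord (gv k).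
have ginj : injective g.
  move=> k k' /(congr1 val); rewrite /= !inordK // => H; apply: val_inj => /=.
  have := ltn_ord k; have := ltn_ord k'; move: H; rewrite /gv.
  by do 4?(case: ifP => ?); lia.
have sub : g @: [set: 'I_(i + b)] \subset nzs b v.
  apply/subsetP => _ /imsetP[k _ ->]; rewrite inE.
  have gE : val (g k) = gv k by rewrite /= inordK.
  case: (k =P 0%N :> nat) => [k0|k0']; last have k0 : (k == 0 :> nat) = false by apply/eqP.
  - apply: (symb_nz (k := 0)) => //; rewrite gE /gv k0 /=. by [].
  case: (ltnP k b) => kb.
  - apply: (symb_nz (k := k)) => //; rewrite gE /gv.
    rewrite k0 kb subnK; last by have := ltn_ord k; lia.
    by rewrite -(add0n n) U_n.
  - apply: (symb_nz (k := k - b)) => //; first by have := ltn_ord k; lia.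
    rewrite gE /gv k0 ltnNge kb /= subnK //; have := ltn_ord k; lia.
have := subset_leq_card sub; rewrite card_imset // cardsT card_ord //.
Qed.


Lemma lower_u i b u : ('X - 1 : {poly F}) ^+ i %| 'X^n - 1 ->
  ('X - 1) ^+ i %| word_poly u -> u != 0 -> (0 < b)%N -> (i <= b)%N ->
  (i + b <= n)%N -> (i + b <= #|nzs b u|)%N.
Proof.
move=> hn hu unz b0 ib ibn.
have [hall|] := boolP ([set: 'I_n] \subset nzs b u).
  by apply: leq_trans ibn _; have := subset_leq_card hall; rewrite cardsT card_ord.
case/subsetPn => j1 _; rewrite inE negbK => /eqP hj1.
have hwin k : (k < b)%N -> U u (j1 + k) = 0 by move=> kb; exact: symb_z hj1.
have [a ha] : exists a : 'I_n, u a != 0.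
  case: (pickP (fun a => u a != 0)) => [a ha|h0]; first by exists a.
  move/eqP: unz; case; apply/ffunP => a; rewrite ffunE; apply/eqP.
  by move: (h0 a) => /= /negbFE.
have exP : exists t, U u (j1 + b + t) != 0.
  exists ((j1 + b) * n' + a)%N.
  have -> : (j1 + b + ((j1 + b) * n' + a) = (j1 + b) * n + a)%N.
    rewrite mulnS; lia.
  by rewrite /U modnMDl modn_small // inord_val.
case: (ex_minnP exP) => t0 ht0 tmin.
pose s := (j1 + b + t0)%N.
have hz k : (1 <= k <= b)%N -> U u (s - k) = 0.
  move=> /andP[k1 kb]; case: (ltnP t0 k) => tk.
  - have -> : (s - k = j1 + (b + t0 - k))%N by rewrite /s; lia.
    apply: hwin; lia.
  - apply/eqP; apply: contraT => H.
    have := tmin (t0 - k)%N; rewrite /s in H.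
    have -> : (j1 + b + (t0 - k) = j1 + b + t0 - k)%N by lia.
    move=> /(_ H); lia.
pose v := iter s rotl u.
have hv : (i + b <= #|nzs b v|)%N.
  apply: lower_v => //.
  - exact: iter_dvd.
  - by rewrite U_iter add0n.
  - move=> k /andP[k1 k2]; rewrite U_iter.
    have -> : (k + s = (s - (n - k)) + n)%N by rewrite /s; lia.
    rewrite U_n; apply: hz; lia.
by rewrite -(card_nzs_iter s).
Qed.


Lemma code_dvd i c : ('X - 1 : {poly F}) ^+ i %| 'X^n - 1 ->
  in_cyc_code i c -> ('X - 1) ^+ i %| word_poly c.
Proof. by move=> hn [g ->]; rewrite -dvdp_mod // dvdp_mulr. Qed.

Lemma wpB c (c' : word F n) : word_poly (c - c') = word_poly c - word_poly c'.
Proof.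
rewrite /word_poly -sumrB; apply: eq_bigr => j _; by rewrite !ffunE scalerBl.
Qed.

Lemma bdistE b c (c' : word F n) : bdist b c c' = #|nzs b (c - c')|.
Proof.
apply: eq_card => j; rewrite !inE.
have -> : symb b (c - c') j = symb b c j - symb b c' j.
  by apply/ffunP => k; rewrite !ffunE.
by rewrite subr_eq0.
Qed.

Definition c0 i : word F n := [ffun k : 'I_n => (('X - 1 : {poly F}) ^+ i)`_k].

Lemma size_Xi i : size (('X - 1 : {poly F}) ^+ i) = i.+1.
Proof. by rewrite -polyC1 size_exp_XsubC. Qed.

Lemma wp_c0 i : (i < n)%N -> word_poly (c0 i) = ('X - 1) ^+ i.
Proof.
move=> ilt; apply/polyP => k; rewrite coef_wp; case: ifP => kn.
  by rewrite /U ffunE inordK modn_small ?ltn_mod.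
apply/esym/eqP; move/negbT: kn; rewrite -leqNgt => kn.
have : (size (('X - 1 : {poly F}) ^+ i) <= k)%N by rewrite size_Xi; lia.
by move/leq_sizeP => /(_ k (leqnn k)) ->.
Qed.

Lemma c0_code i : (i < n)%N -> in_cyc_code i (c0 i).
Proof.
move=> ilt; exists 1; rewrite mulr1 modp_small; first exact: wp_c0.
by rewrite size_Xi -polyC1 size_XnsubC.
Qed.

Lemma zero_code i : in_cyc_code i (0 : word F n).
Proof.
exists 0; rewrite mulr0 mod0p /word_poly big1 // => j _.
by rewrite ffunE scale0r.
Qed.

Lemma c0_nz i : (i < n)%N -> c0 i != 0.
Proof.
move=> ilt; apply/eqP => H; have := wp_c0 ilt; rewrite H.
have -> : word_poly (0 : word F n) = 0.
  by rewrite /word_poly big1 // => j _; rewrite ffunE scale0r.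
move/(congr1 (size : {poly F} -> nat)); rewrite size_Xi size_poly0 //.
Qed.

Lemma upper_c0 i b : (0 < b)%N -> (i + b <= n)%N -> (#|nzs b (c0 i)| <= i + b)%N.
Proof.
move=> b0 ibn.
have ilt : (i < n)%N by lia.
pose h (k : 'I_(i + b)) : 'I_n := inord (if (k <= i)%N then (k : nat) else n - (k - i))%N.
apply: (@leq_trans #|h @: [set: 'I_(i + b)]|); last by rewrite (leq_trans (leq_imset_card _ _)) // cardsT card_ord.
apply: subset_leq_card; apply/subsetP => j; rewrite inE => hj.
have hj' : (j <= i)%N || (n - b < j)%N.
  apply: contraR hj => /norP[]; rewrite -!ltnNge => ij jb.
  apply/eqP/ffunP => k; rewrite symbE ffunE.
  have lt : (j + k < n)%N by have := ltn_ord k; lia.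
  have := coef_wp (c0 i) (j + k); rewrite lt wp_c0 // => <-.
  have : (size (('X - 1 : {poly F}) ^+ i) <= j + k)%N by rewrite size_Xi; lia.
  by move/leq_sizeP => /(_ _ (leqnn _)) ->.
apply/imsetP.
case/orP: hj' => hj'.
- have kl : (j < i + b)%N by lia.
  exists (Ordinal kl); first by rewrite inE.
  by apply: val_inj; rewrite /h /= hj' inordK //; have := ltn_ord j; lia.
- have kl : (i + n - j < i + b)%N by have := ltn_ord j; lia.
  exists (Ordinal kl); first by rewrite inE.
  apply: val_inj; rewrite /h /=.
  have -> : (i + n - j <= i)%N = false by have := ltn_ord j; lia.
  rewrite inordK; have := ltn_ord j; lia.
Qed.

End Main.

Theorem theorem2p8 (p m e b i : nat) (F : finFieldType) :
  prime p -> (0 < m)%N -> #|F| = (p ^ m)%N ->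
  (2 <= e)%N -> (2 <= b)%N ->
  (1 <= i)%N -> (i <= p ^ e.-1)%N -> (i + b <= p ^ e)%N -> (i <= b)%N ->
  min_bdist b (@in_cyc_code F (p ^ e) i) (i + b).
Proof.
move=> pp m0 cF e2 b2 i1 ie ibn ib.
have hX := charX e pp cF.
have hdiv : ('X - 1 : {poly F}) ^+ i %| 'X^(p ^ e) - 1.
  by rewrite -hX dvdp_exp2l //; lia.
have [n' hn'] : exists n', (p ^ e)%N = n'.+1.
  by exists (p ^ e).-1; rewrite prednK // expn_gt0 prime_gt0.
move: hdiv ibn; rewrite hn' => hdiv ibn.
have b0 : (0 < b)%N by lia.
have ilt : (i < n'.+1)%N by lia.
split.
- exists (@c0 F n' i), 0; split.
  + exact: c0_code.
  + exact: zero_code.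
  + by apply/eqP; exact: c0_nz.
  + rewrite bdistE subr0; apply/eqP; rewrite eqn_leq upper_c0 //=.
    apply: lower_u => //; last exact: c0_nz.
    by rewrite wp_c0.
- move=> c c' hc hc' hne; rewrite bdistE.
  apply: lower_u => //.
  + by rewrite wpB; apply: dvdp_sub; apply: code_dvd.
  + by rewrite subr_eq0; apply/eqP.
Qed.
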